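(* Let $k\geq 2$, let $G$ be a graph with $G\in\mathcal{R}_k$, and let $x\in V(G)$. Let $G'$ be the graph obtained from $G$ by adding a new vertex $y\notin V(G)$ and the edge $(x,y)$. Then $G'\in\mathcal{R}_k$.
   Context: All graphs are finite and simple. For a word $w$ and distinct letters $x,y$ occurring in $w$, $x$ and $y$ alternate in $w$ if deleting all letters other than copies of $x$ and $y$ yields a word of the form $xyxy\cdots$ or $yxyx\cdots$ (of even or odd length). A graph $G=(V,E)$ is word-representable if there is a word $w$ over $V$ (each vertex occurring in $w$) such that for all distinct $x,y\in V$, $x$ and $y$ alternate in $w$ iff $(x,y)\in E$. A word is $k$-uniform if each letter occurs exactly $k$ times; $G$ is $k$-word-representable if some $k$-uniform word represents it. The representation number $\mathcal{R}(G)$ is the least such $k$, and $\mathcal{R}_k$ is the class of word-representable graphs with representation number exactly $k$. *)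

(* Defs.v *)
From mathcomp Require Import all_boot.
Set Implicit Arguments. Unset Strict Implicit. Unset Printing Implicit Defensive.

(* A finite simple graph: vertex type T (finType), edge relation e : rel T,
   assumed symmetric and irreflexive in the theorem. *)

Definition alternate (T : eqType) (w : seq T) (x y : T) : bool :=
  sorted (fun a b => a != b) [seq z <- w | (z == x) || (z == y)].

Definition represents (T : finType) (e : rel T) (w : seq T) : Prop :=
  (forall v : T, v \in w) /\
  (forall x y : T, x != y -> (alternate w x y <-> e x y)).

Definition word_representable (T : finType) (e : rel T) : Prop :=
  exists w : seq T, represents e w.

Definition k_uniform (T : finType) (k : nat) (w : seq T) : Prop :=
  forall v : T, count_mem v w = k.

Definition k_word_representable (T : finType) (e : rel T) (k : nat) : Prop :=
  exists w : seq T, k_uniform k w /\ represents e w.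

Definition in_Rk (T : finType) (e : rel T) (k : nat) : Prop :=
  word_representable e /\ k_word_representable e k /\
  (forall j, j < k -> ~ k_word_representable e j).

(* G' : add a new vertex (None) adjacent only to x; old vertices are Some v *)
Definition add_pendant (T : finType) (e : rel T) (x : T) : rel (option T) :=
  fun a b => match a, b with
             | Some u, Some v => e u v
             | None, Some v => v == x
             | Some u, None => u == x
             | None, None => false
             end.

(* Main.v *)
Require Import Defs.
From mathcomp Require Import all_boot.
From mathcomp Require Import zify.

Section Constr.
Variables (T : finType) (x : T) (k : nat).

Definition pre n : seq (option T) := if n == 0 then [:: None] else [::].
Definition post n : seq (option T) := if n < k.-1 then [:: None] else [::].

Fixpoint f n (s : seq T) : seq (option T) :=
  match s with
  | [::] => [::]
  | a :: s' => if a == x then pre n ++ Some a :: post n ++ f n.+1 s'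
               else Some a :: f n s'
  end.

Definition optP (P : pred T) : pred (option T) :=
  fun o => if o is Some a then P a else false.

Lemma filter_f_opt P n s : filter (optP P) (f n s) = map Some (filter P s).
Proof.
elim: s n => [|a s IH] n //=.
case: ifP => _.
- rewrite filter_cat /= filter_cat IH /pre /post.
  by case: (n == 0); case: (n < k.-1) => /=; case: (P a).
- by rewrite /= IH; case: (P a).
Qed.

Lemma filter_f_x n s :
  filter (fun o => (o == None) || (o == Some x)) (f n s) = f n (filter (pred1 x) s).
Proof.
elim: s n => [|a s IH] n //=.
case: (eqVneq a x) => [->|ne] /=.
- rewrite eqxx /= filter_cat /= filter_cat IH /pre /post.
  by case: (n == 0); case: (n < k.-1) => /=; rewrite eqxx.
- have -> : (Some a == Some x) = false by apply/negbTE; apply: contra ne => /eqP [->].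
  by rewrite IH.
Qed.

Lemma f_nox n s1 s : x \notin s1 -> f n (s1 ++ s) = map Some s1 ++ f n s.
Proof.
elim: s1 => [|a s1 IH] //=.
rewrite in_cons negb_or => /andP [ne ns].
by rewrite eq_sym (negbTE ne) IH.
Qed.

Lemma count_f_nseq n m : 0 < n -> n + m = k -> count_mem None (f n (nseq m x)) = m.-1.
Proof.
elim: m n => [|m IH] n n0 nm //=.
rewrite eqxx count_cat /pre /post.
have -> : (n == 0) = false by case: n n0 nm.
rewrite /= add0n count_cat IH //; last by lia.
case: ifP => /= h; lia.
Qed.

Lemma path_f_nseq n m : 0 < n -> n + m = k ->
  path (fun a b => a != b) None (f n (nseq m x)).
Proof.
elim: m n => [|m IH] n n0 nm //=.
rewrite eqxx /pre /post.
have -> : (n == 0) = false by case: n n0 nm.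
rewrite /=.
case: ifP => h /=.
- by rewrite IH //; lia.
- have -> : m = 0 by lia.
  by [].
Qed.

Lemma f0 : 2 <= k -> f 0 (nseq k x) = None :: Some x :: None :: f 1 (nseq k.-1 x).
Proof.
move=> h.
case E: k h => [|k'] //= h.
rewrite eqxx /pre /post E /=.
by have -> : 0 < k' by lia.
Qed.

End Constr.

Lemma filter_pred1_nseq (T : eqType) (x : T) s : filter (pred1 x) s = nseq (count_mem x s) x.
Proof.
elim: s => [|a s IH] //=.
case: (eqVneq a x) => [->|ne] /=; first by rewrite add0n IH.
by rewrite add0n IH.
Qed.

Lemma path_mapSome (T : eqType) (a : T) t :
  path (fun a b => a != b) (Some a) (map Some t) = path (fun a b => a != b) a t.
Proof.
elim: t a => [|b t IH] a //=.
by rewrite IH.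
Qed.

Lemma sorted_mapSome (T : eqType) (t : seq T) :
  sorted (fun a b => a != b) (map Some t) = sorted (fun a b => a != b) t.
Proof. case: t => [|a t] //=; exact: path_mapSome. Qed.

Lemma path_dup (T : eqType) (y b : T) a c :
  path (fun a b => a != b) y (a ++ b :: b :: c) -> False.
Proof.
elim: a y => [|a0 a IH] y /=.
- by rewrite eqxx andbF.
- by move=> /andP [_ /IH].
Qed.

Lemma sorted_dup (T : eqType) (b : T) a c :
  ~~ sorted (fun a b => a != b) (a ++ b :: b :: c).
Proof.
apply/negP; case: a => [|a0 a] /=.
- by rewrite eqxx.
- exact: path_dup.
Qed.

Lemma split_first (T : eqType) (x : T) s : x \in s ->
  exists s1 s2, s = s1 ++ x :: s2 /\ x \notin s1.
Proof.
elim: s => [|a s IH] //.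
rewrite in_cons; case: (eqVneq x a) => [->|ne] /= H.
- by exists [::], s.
- have [s1 [s2 [-> H2]]] := IH H.
  exists (a :: s1), s2; split => //.
  by rewrite in_cons negb_or ne.
Qed.

Lemma alternate_sym (T : eqType) (w : seq T) a b : alternate w a b = alternate w b a.
Proof. by rewrite /alternate; congr sorted; apply: eq_filter => z; exact: orbC. Qed.

Lemma pmap_filter_opt (T : finType) (P : pred T) (s : seq (option T)) :
  filter (optP _ P) s = map Some (filter P (pmap id s)).
Proof.
elim: s => [|[a|] s IH] //=.
by rewrite IH; case: (P a).
Qed.

Theorem proposition6 (T : finType) (e : rel T) (k : nat) (x : T) :
  symmetric e -> irreflexive e -> 2 <= k -> in_Rk e k ->
  in_Rk (add_pendant e x) k.
Proof.
move=> _ _ k2 [_ [[w [wu [wall wrep]]] wmin]].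
pose wp := @f _ x k 0 w.
have cS : forall v, count_mem (Some v) wp = k.
  move=> v; rewrite -size_filter (@eq_filter _ _ (optP _ (pred1 v))); last first.
    by case.
  by rewrite filter_f_opt size_map size_filter wu.
have cN : count_mem None wp = k.
  rewrite -(@eq_count _ (predI (pred1 None) (fun o => (o == None) || (o == Some x)))); last first.
    by case.
  rewrite -count_filter filter_f_x filter_pred1_nseq wu f0 //= count_f_nseq //; lia.
have Hu : k_uniform k wp by case.
have Hall : forall o, o \in wp.
  move=> o; rewrite -has_pred1 has_count.
  by case: o => [v|]; [rewrite cS | rewrite cN]; lia.
have altN : forall z, alternate wp None (Some z) <-> z == x.
  move=> z; case: (eqVneq z x) => [->|ne].
  - split => // _; rewrite /alternate filter_f_x filter_pred1_nseq wu f0 //=.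
    apply: path_f_nseq => //; lia.
  - split => // H; exfalso; move: H.
    have [s1 [s2 [ws1 nx]]] := split_first _ _ _ (wall x).
    rewrite /alternate /wp ws1 f_nox //= eqxx /pre /post /=.
    have -> : 0 < k.-1 by lia.
    rewrite /= filter_cat /=.
    have -> : (Some x == Some z) = false by apply/negbTE; rewrite eq_sym.
    by apply/negP; apply: sorted_dup.
have Hrep : represents (add_pendant e x) wp.
  split => // [[u|] [v|]] //= neq.
  - rewrite /alternate (@eq_filter _ _ (optP _ (fun z => (z == u) || (z == v)))); last by case.
    rewrite filter_f_opt sorted_mapSome; exact: wrep.
  - by rewrite alternate_sym altN.
split; first by exists wp.
split; first by exists wp.
move=> j jk [w2 [w2u [w2all w2rep]]].
apply: (wmin j jk); exists (pmap id w2); split; [|split].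
- move=> v; rewrite -size_filter -(size_map Some) -pmap_filter_opt size_filter -(w2u (Some v)).
  by apply: eq_count; case.
- move=> v; rewrite mem_pmap map_id; exact: w2all.
- move=> u v neq.
  have := w2rep (Some u) (Some v) neq.
  rewrite /alternate (@eq_filter _ _ (optP _ (fun z => (z == u) || (z == v)))); last by case.
  by rewrite pmap_filter_opt sorted_mapSome.
Qed.
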